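(* Let $\{\alpha_i\}_{i=1}^N$ be an optimal solution of $$\hat{\mathcal{P}}_1:\ \min_{\{\alpha_i\}}\ \sum_{n=1}^N (1-\alpha_n)c_n\quad\text{s.t.}\quad \sum_{k=1}^{i}\alpha_k p^{inv}_{H,k}\tau\le\sum_{l=1}^{i}E_{H,l},\ \ \alpha_i p^{inv}_{H,i}\le p_H^{\max},\ \ \alpha_i\in\{0,1\},\ \ \forall i\in\{1,\dots,N\}.$$ Then there do not exist indices $i<j$ such that $\alpha_i=1$, $\alpha_j=0$, $c_i<c_j$ and $p^{inv}_{H,i}\ge p^{inv}_{H,j}$.
   Context: Data: $N$, $\tau>0$, $E_{H,i}\ge0$, channel gains $h_{G,i},h_{H,i}>0$, $p_G^{\max},p_H^{\max}>0$, $R,W,\sigma^2>0$, weights $w_G,w_D>0$. $p^{inv}_{j,i}=(2^{R/(W\tau)}-1)\sigma^2 h_{j,i}^{-1}$ for $j\in\{G,H\}$, $\kappa=\min\{p_G^{\max},w_D(w_G\tau)^{-1}\}$, and $c_i=w_D$ if $p^{inv}_{G,i}>\kappa$, $c_i=w_G p^{inv}_{G,i}\tau$ otherwise. *)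

(* Defs.v *)
From Stdlib Require Import Reals Lra Lia.
Open Scope R_scope.

Fixpoint sum1 (f : nat -> R) (n : nat) : R :=
  match n with
  | O => 0
  | S m => sum1 f m + f (S m)
  end.

Definition pinv (Rate W tau sigma2 : R) (h : nat -> R) (i : nat) : R :=
  (Rpower 2 (Rate / (W * tau)) - 1) * sigma2 * / h i.

Definition kappa (pGmax wG wD tau : R) : R := Rmin pGmax (wD * / (wG * tau)).

Definition cost (Rate W tau sigma2 pGmax wG wD : R) (hG : nat -> R) (i : nat) : R :=
  let p := pinv Rate W tau sigma2 hG i in
  if Rlt_dec (kappa pGmax wG wD tau) p then wD else wG * p * tau.

Definition feasible (N : nat) (tau pHmax : R) (EH pH : nat -> R) (alpha : nat -> R) : Prop :=
  forall i, (1 <= i <= N)%nat ->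
    sum1 (fun k => alpha k * pH k * tau) i <= sum1 EH i /\
    alpha i * pH i <= pHmax /\
    (alpha i = 0 \/ alpha i = 1).

Definition objective (N : nat) (c : nat -> R) (alpha : nat -> R) : R :=
  sum1 (fun n => (1 - alpha n) * c n) N.

Definition optimal (N : nat) (tau pHmax : R) (EH pH c : nat -> R) (alpha : nat -> R) : Prop :=
  feasible N tau pHmax EH pH alpha /\
  forall beta, feasible N tau pHmax EH pH beta -> objective N c alpha <= objective N c beta.

(* Main.v *)
Require Import Defs.
From Stdlib Require Import Reals Lra Lia.
Open Scope R_scope.

Lemma sum1_change (f g : nat -> R) (i j : nat) (Hij : i <> j) (Hi : (1 <= i)%nat)
  (Hj : (1 <= j)%nat) (H : forall k, k <> i -> k <> j -> g k = f k) (n : nat) :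
  sum1 g n = sum1 f n + (if Nat.leb i n then g i - f i else 0)
                      + (if Nat.leb j n then g j - f j else 0).
Proof.
  induction n as [|n IH]; simpl.
  - destruct (Nat.leb_spec i 0); [lia|]. destruct (Nat.leb_spec j 0); [lia|]. lra.
  - rewrite IH.
    destruct (Nat.leb_spec i n); destruct (Nat.leb_spec j n);
    destruct (Nat.leb_spec i (S n)); destruct (Nat.leb_spec j (S n)); try lia.
    all: try (assert (i = S n) by lia; subst i);
         try (assert (j = S n) by lia; subst j);
         try (rewrite (H (S n)) by lia); lra.
Qed.


Theorem proposition1 (N : nat) (tau : R) (EH hG hH : nat -> R)
  (pGmax pHmax Rate W sigma2 wG wD : R)
  (Htau : 0 < tau) (HEH : forall i, (1 <= i <= N)%nat -> 0 <= EH i)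
  (HhG : forall i, (1 <= i <= N)%nat -> 0 < hG i)
  (HhH : forall i, (1 <= i <= N)%nat -> 0 < hH i)
  (HpG : 0 < pGmax) (HpH : 0 < pHmax) (HRate : 0 < Rate) (HW : 0 < W)
  (Hsigma : 0 < sigma2) (HwG : 0 < wG) (HwD : 0 < wD)
  (alpha : nat -> R)
  (Hopt : optimal N tau pHmax EH (pinv Rate W tau sigma2 hH)
            (cost Rate W tau sigma2 pGmax wG wD hG) alpha) :
  ~ (exists i j : nat, (1 <= i)%nat /\ (i < j)%nat /\ (j <= N)%nat /\
       alpha i = 1 /\ alpha j = 0 /\
       cost Rate W tau sigma2 pGmax wG wD hG i < cost Rate W tau sigma2 pGmax wG wD hG j /\
       pinv Rate W tau sigma2 hH i >= pinv Rate W tau sigma2 hH j).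
Proof.
  intros (i & j & Hi & Hij & HjN & Hai & Haj & Hc & Hp).
  destruct Hopt as [Hfeas Hmin].
  set (pH := pinv Rate W tau sigma2 hH) in *.
  set (c := cost Rate W tau sigma2 pGmax wG wD hG) in *.
  set (beta := fun k => if Nat.eqb k i then 0 else if Nat.eqb k j then 1 else alpha k).
  assert (Hbi : beta i = 0) by (unfold beta; rewrite Nat.eqb_refl; reflexivity).
  assert (Hbj : beta j = 1) by (unfold beta; destruct (Nat.eqb_spec j i); [lia|];
            rewrite Nat.eqb_refl; reflexivity).
  assert (Hbo : forall k, k <> i -> k <> j -> beta k = alpha k).
  { intros k H1 H2; unfold beta. destruct (Nat.eqb_spec k i); [lia|].
    destruct (Nat.eqb_spec k j); [lia|]. reflexivity. }
  assert (Hpos : 0 <= pH i).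
  { unfold pH, pinv.
    assert (1 < Rpower 2 (Rate / (W * tau))).
    { rewrite <- (Rpower_O 2) at 1 by lra. apply Rpower_lt; [lra|].
      apply Rdiv_lt_0_compat; [lra|]. apply Rmult_lt_0_compat; lra. }
    assert (0 < / hH i) by (apply Rinv_0_lt_compat; apply HhH; lia).
    apply Rlt_le. apply Rmult_lt_0_compat; [|lra]. apply Rmult_lt_0_compat; lra. }
  assert (Hfb : feasible N tau pHmax EH pH beta).
  { intros k Hk. destruct (Hfeas k Hk) as (Hs & Hm & H01). split; [|split].
    - rewrite (sum1_change (fun k => alpha k * pH k * tau) (fun k => beta k * pH k * tau) i j)
        by (lia || (intros; rewrite Hbo by assumption; reflexivity)).
      rewrite Hbi, Hbj, Hai, Haj.
      destruct (Nat.leb_spec i k); destruct (Nat.leb_spec j k); try lia.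
      + assert (pH i * tau >= pH j * tau) by (apply Rmult_ge_compat_r; lra). lra.
      + assert (0 <= pH i * tau) by (apply Rmult_le_pos; lra). lra.
      + lra.
    - destruct (Nat.eq_dec k i); [subst; rewrite Hbi; lra|].
      destruct (Nat.eq_dec k j); [subst; rewrite Hbj|rewrite Hbo by assumption; exact Hm].
      destruct (Hfeas i ltac:(lia)) as (_ & Hmi & _). rewrite Hai in Hmi. lra.
    - destruct (Nat.eq_dec k i); [subst; rewrite Hbi; auto|].
      destruct (Nat.eq_dec k j); [subst; rewrite Hbj; auto|rewrite Hbo by assumption; exact H01]. }
  specialize (Hmin beta Hfb). unfold objective in Hmin.
  rewrite (sum1_change (fun n => (1 - alpha n) * c n) (fun n => (1 - beta n) * c n) i j)
    in Hmin by (lia || (intros; rewrite Hbo by assumption; reflexivity)).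
  rewrite Hbi, Hbj, Hai, Haj in Hmin.
  destruct (Nat.leb_spec i N); destruct (Nat.leb_spec j N); try lia. lra.
Qed.
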